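(* Let $\mathcal{G}=(V,L)$ be a finite connected undirected graph with monitor set $M\subseteq V$ and non-monitor set $N=V\setminus M$, $\sigma=|N|$, and let the measurement paths $P$ be given by Controllable Simple-path Probing (CSP). Let $S\subseteq N$ be nonempty. Then: (a) if $k\le\sigma-2$, $\Gamma_{\mathcal{G}^*}(S,m')\ge k+2$ and $\min_{m\in M}\Gamma_{\mathcal{G}_m}(S,m')\ge k+1$, then $S$ is $k$-identifiable; (b) if $k\le\sigma-1$ and $S$ is $k$-identifiable, then $\Gamma_{\mathcal{G}^*}(S,m')\ge k+1$ and $\min_{m\in M}\Gamma_{\mathcal{G}_m}(S,m')\ge k$.
   Context: Here $k\ge1$ is an integer. Failure model: a failure set is any $F\subseteq N$ (monitors never fail). A measurement path fails iff it traverses at least one node of $F$. $P_F$ denotes the set of paths in $P$ traversing at least one node of $F$. Two failure sets $F_1,F_2$ are distinguishable iff $P_{F_1}\neq P_{F_2}$. A set $S\subseteq N$ is $k$-identifiable if any two failure sets $F_1,F_2\subseteq N$ with $|F_1|,|F_2|\le k$ and $F_1\cap S\neq F_2\cap S$ are distinguishable. Under CSP, $P$ consists of all simple paths (no repeated nodes) in $\mathcal{G}$ between two distinct monitors. For $M'\subseteq M$, $\mathcal{N}(M')$ denotes the set of non-monitors adjacent to at least one monitor in $M'$. The auxiliary graph $\mathcal{G}^*$ is obtained from $\mathcal{G}$ by deleting all monitors, adding a virtual node $m'$, and linking $m'$ to every node of $\mathcal{N}(M)$. For $m\in M$, the auxiliary graph $\mathcal{G}_m$ is obtained from $\mathcal{G}$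 by deleting all monitors, adding a virtual node $m'$, and linking $m'$ to every node of $\mathcal{N}(M\setminus\{m\})$. For nodes $s,t$ of a graph $\mathcal{H}$, $C_{\mathcal{H}}(s,t)$ is a minimum-cardinality set of nodes (other than $s,t$) whose deletion destroys all $s$–$t$ paths; if $s,t$ are adjacent, $C_{\mathcal{H}}(s,t):=V(\mathcal{H})\setminus\{t\}$. $\Gamma_{\mathcal{H}}(S,m):=\min_{w\in S}|C_{\mathcal{H}}(w,m)|$. *)

(* Defs.v *)
From mathcomp Require Import all_boot.
Set Implicit Arguments. Unset Strict Implicit. Unset Printing Implicit Defensive.

Section Defs.
Variable V : finType.
Variable e : rel V.
Variable M : {set V}.        (* monitors; N = ~: M *)

(* Measurement paths under CSP: simple paths (as node sequences) between two
   distinct monitors. *)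
Definition csp_path (p : seq V) : bool :=
  if p is x :: q then
    [&& path e x q, uniq p, x \in M, last x q \in M & x != last x q]
  else false.

Definition PF (F : {set V}) (p : seq V) : bool :=
  csp_path p && has (fun v => v \in F) p.

Definition distinguishable (F1 F2 : {set V}) : Prop :=
  exists p : seq V, PF F1 p != PF F2 p.

Definition k_identifiable (k : nat) (S : {set V}) : Prop :=
  forall F1 F2 : {set V},
    F1 \subset ~: M -> F2 \subset ~: M ->
    #|F1| <= k -> #|F2| <= k ->
    F1 :&: S != F2 :&: S -> distinguishable F1 F2.
End Defs.

(* Generic graph H given by a vertex set W of a finite type T and an edge
   relation h (only edges between vertices of W count). *)
Section Cut.
Variable T : finType.
Variable h : rel T.
Variable W : {set T}.

Definition restr (X : {set T}) : rel T :=
  [rel x y | [&& h x y, x \in X & y \in X]].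

Definition separates (s t : T) (C : {set T}) : bool :=
  (C \subset W :\: [set s; t]) && ~~ connect (restr (W :\: C)) s t.

Definition cutsize (s t : T) : nat :=
  if h s t then #|W :\ t|
  else \big[minn/#|W|]_(C : {set T} | separates s t C) #|C|.

Definition Gamma (S : {set T}) (t : T) : nat :=
  \big[minn/#|T|]_(w in S) cutsize w t.
End Cut.

(* Auxiliary graphs on option V: None is the virtual node m',
   Some v is the node v of N. *)
Section Aux.
Variable V : finType.
Variable e : rel V.
Variable N : {set V}.

Definition aux_verts : {set option V} := None |: (Some @: N).

Definition aux_edge (A : {set V}) : rel (option V) :=
  fun x y => match x, y with
  | Some u, Some v => e u v
  | None, Some v | Some v, None => (v \in N) && [exists m in A, e m v]
  | None, None => false
  end.
End Aux.

Definition Gamma_star (V : finType) (e : rel V) (M S : {set V}) : nat :=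
  Gamma (aux_edge e (~: M) M) (aux_verts (~: M)) (Some @: S) None.

Definition Gamma_m (V : finType) (e : rel V) (M : {set V}) (m : V) (S : {set V}) : nat :=
  Gamma (aux_edge e (~: M) (M :\ m)) (aux_verts (~: M)) (Some @: S) None.

(* Main.v *)
Require Import Defs.
From mathcomp Require Import all_boot zify.
Set Implicit Arguments. Unset Strict Implicit. Unset Printing Implicit Defensive.
Ltac glia := repeat match goal with
  | |- context [nat_of_bool false] => change (nat_of_bool false) with 0
  | |- context [nat_of_bool true] => change (nat_of_bool true) with 1
  | |- context [nat_of_bool ?b] => let n := fresh "b" in set n := nat_of_bool b; clearbody n
  | |- context [count ?p ?s] => let n := fresh "n" in set n := count p s; clearbody n end;
  repeat match goal with H : _ |- _ => clear H end; intros; lia.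

Section Seqs.
Variable T : eqType.
Implicit Types (s : seq T) (x : T).

Lemma uniq_cnt s : (forall x, count_mem x s <= 1) -> uniq s.
Proof.
elim: s => //= y s IH H; apply/andP; split.
  have := H y; rewrite eqxx /= add1n ltnS leqn0 => /eqP.
  by move/count_memPn.
by apply: IH => x; have := H x; case: (y == x) => /=; lia.
Qed.

Lemma cnt1 s x : uniq s -> count_mem x s <= 1.
Proof. by move=> u; rewrite count_uniq_mem // leq_b1. Qed.

Lemma cnt0 s x : x \notin s -> count_mem x s = 0.
Proof. by move/count_memPn. Qed.

Lemma mem_bl x0 s x : x \in x0 :: s -> (x \in belast x0 s) || (x == last x0 s).
Proof. by rewrite lastI mem_rcons inE orbC. Qed.

Lemma last_notin_bl x0 s : uniq (x0 :: s) -> last x0 s \notin belast x0 s.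
Proof. by rewrite lastI rcons_uniq => /andP[]. Qed.
End Seqs.
Section Seg.
Variables (T : eqType) (e : rel T) (A B : pred T).
Hypothesis AB : forall x, A x -> ~~ B x.

Lemma seg s u h : A u -> all (fun x => ~~ A x && ~~ B x) h ->
  uniq (u :: h ++ s) -> path e u (h ++ s) -> B (last u (h ++ s)) ->
  exists y g z, [/\ A y, B z, path e y (rcons g z),
     all (fun x => ~~ A x && ~~ B x) g &
     uniq (y :: rcons g z) /\ {subset y :: rcons g z <= u :: h ++ s}].
Proof.
elim: s u h => [|v s IH] u h Au Hh Uu Pu Bl.
  rewrite cats0 in Bl.
  have := mem_last u h; rewrite inE => /orP[/eqP E|Hin].
    by move: (AB Au); rewrite -E Bl.
  by have /andP[_] := allP Hh _ Hin; rewrite Bl.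
case Bv: (B v).
  exists u, h, v; split => //; first by move: Pu; rewrite -cat_rcons cat_path => /andP[].
  split; first by move: Uu; rewrite -cat_rcons -cat_cons cat_uniq => /andP[].
  by move=> x; rewrite -cat_rcons -cat_cons mem_cat => ->.
case Av: (A v).
  have [|||y [g [z [Ay Bz pg ag [ug sub]]]]] := IH v [::] Av isT.
  - by move: Uu; rewrite -cat_cons cat_uniq => /and3P[].
  - by move: Pu; rewrite cat_path => /andP[_] /= /andP[].
  - by move: Bl; rewrite last_cat.
  exists y, g, z; split => //; split => // x /sub Hx.
  by rewrite -cat_cons mem_cat Hx orbT.
have [||||y [g [z [Ay Bz pg ag [ug sub]]]]] := IH u (rcons h v) Au.
- by rewrite all_rcons Av Bv.
- by rewrite cat_rcons.
- by rewrite cat_rcons.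
- by rewrite cat_rcons.
by exists y, g, z; split => //; split => //; rewrite -cat_rcons.
Qed.
End Seg.

Section FanSec.
Variables (T : finType) (e : rel T) (W X : {set T}) (w : T).
Hypothesis WX : forall x, x \in X -> x \notin W.
Hypothesis wW : w \in W.

Record good (Y Z : {set T}) (p : seq T) : Prop := Good {
  g_p : path e w p; g_l : last w p \in Z;
  g_W : all (fun x => x \in Y) (belast w p); g_u : uniq (w :: p) }.

Record cfg (a p1 p2 : seq T) : Prop := Cfg {
  c_pa : path e w a; c_p1 : path e (last w a) p1; c_p2 : path e (last w a) p2;
  c_u : uniq (w :: a ++ p1 ++ p2); c_Wa : all (fun x => x \in W) (w :: a);
  c_W1 : all (fun x => x \in W) (belast (last w a) p1);
  c_W2 : all (fun x => x \in W) (belast (last w a) p2);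
  c_X1 : last (last w a) p1 \in X; c_X2 : last (last w a) p2 \in X;
  c_ne : last (last w a) p1 != last (last w a) p2 }.

Lemma init : (exists p, good W X p) ->
  (forall x0, x0 \in X -> exists p, good W (X :\ x0) p) ->
  exists a p1 p2, cfg a p1 p2.
Proof.
move=> [P [pP lP WP uP]] /(_ _ lP) [Q [pQ lQ WQ uQ]].
have Pn : P != [::] by case: (P) lP => //= lw; move: (WX lw); rewrite wW.
have [||||||y [g [z [Ay Bz pg ag [ug sub]]]]] :=
  @seg T e (fun x => x \in belast w P) (fun x => x \in X) _ Q w [::].
- by move=> x /= /(allP WP) xW; apply/negP => /WX; rewrite xW.
- by case: (P) Pn => //= x P' _; rewrite inE eqxx.
- by [].
- by [].
- by [].
- by move: lQ; rewrite inE => /andP[].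
have zx1 : z != last w P.
  have := sub z; rewrite !inE mem_rcons inE eqxx orbT => /(_ isT) /mem_bl.
  case/orP => [/(allP WQ) zW|/eqP ->]; first by move: (WX Bz); rewrite zW.
  by move: lQ; rewrite !inE => /andP[].
have gW : all (fun x => x \in W) g.
  apply/allP => x xg; have /andP[_ xX] := allP ag _ xg.
  have := sub x; rewrite /= inE mem_rcons inE xg !orbT => /(_ isT) /mem_bl.
  case/orP => [/(allP WQ) //|/eqP E]; move: lQ; rewrite -E inE => /andP[_].
  by rewrite (negbTE xX).
have yW : y \in W by apply: (allP WP).
have Hy : y \in w :: P by apply: mem_belast Ay.
clear lQ sub; move: pP lP WP uP Pn Ay zx1 ag.
case: P / {Hy}(splitPl Hy) => a p1 ly pP lP WP uP Pn Ay zx1 ag.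
exists a, p1, (rcons g z).
move: pP; rewrite cat_path ly => /andP[pa pp1].
have WP0 := WP; move: WP; rewrite belast_cat all_cat ly => /andP[Wba Wp1].
constructor; rewrite ?ly //.
  have ug2 : uniq (rcons g z) by case/andP: ug.
  rewrite -cat_cons catA cat_uniq uP /= ug2 andbT.
  apply/hasPn => x; rewrite mem_rcons inE => /orP[/eqP->|xg].
    apply/negP => /mem_bl /orP[/(allP WP0) zW|/eqP zl].
      by move: (WX Bz); rewrite zW.
    by move: zx1; rewrite -zl eqxx.
  have /andP[xA xX] := allP ag _ xg.
  apply/negP => /mem_bl /orP[xb|/eqP xl].
    by rewrite xb in xA.
  by move: xX; rewrite xl lP.
- apply/allP => x /mem_bl /orP[/(allP Wba) //|/eqP ->]; by rewrite ly.
- by rewrite belast_rcons /= yW.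
- by move: lP; rewrite last_cat ly.
- by rewrite last_rcons.
- by rewrite last_rcons eq_sym -ly -last_cat.
Qed.

Lemma step_c1 a p1 p2 y g z :
  cfg a p1 p2 -> y \in w :: a -> y != last w a -> all (fun x => x \in W) g ->
  all (fun x => (x \notin w :: a) && ~~ ((x \in p1) || (x \in p2) || (x \in X))) g ->
  path e y (rcons g z) -> uniq (y :: rcons g z) -> z \in p1 ->
  exists a' p1' p2', cfg a' p1' p2' /\ size a' < size a.
Proof.
move=> [pa pp1 pp2 U Wa W1 W2 X1 X2 ne] Ay yb gW ag pg ug Hz.
move: pa pp1 pp2 U Wa W1 W2 X1 X2 ne yb ag.
case: a / {Ay}(splitPl Ay) => a1 a2 ly.
case: p1 / {Hz}(splitPr Hz) => u1 u2 pa pp1 pp2 U Wa W1 W2 X1 X2 ne yb ag.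
have a2n : a2 != [::] by case: (a2) yb => //; rewrite cats0 ly eqxx.
have ug2 : uniq g by move: ug; rewrite /= rcons_uniq => /and3P[].
have zg : z \notin g by move: ug; rewrite /= rcons_uniq => /and3P[].
move: pa; rewrite cat_path ly => /andP[pa1 pa2].
rewrite last_cat ly in pp1 pp2 W1 W2 X1 X2 ne.
have yW : y \in W by apply: (allP Wa); rewrite -ly -cat_cons mem_cat mem_last.
exists a1, (rcons g z ++ u2), (a2 ++ p2); split; last first.
  by rewrite size_cat -{1}(addn0 (size a1)) ltn_add2l lt0n size_eq0.
constructor; rewrite ?ly.
- exact: pa1.
- rewrite cat_path pg last_rcons /=.
  by move: pp1; rewrite cat_path => /andP[_] /= /andP[].
- by rewrite cat_path pa2.
- apply: uniq_cnt => x; have := cnt1 x U.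
  rewrite -cats1 /= !count_cat /=.
  case xg: (x \in g); last by rewrite (cnt0 (negbT xg)); glia.
  have /andP[xA xB] := allP ag _ xg.
  move: xA xB; rewrite !inE !mem_cat !inE !negb_or => /and3P[xw xa1 xa2] /andP[/andP[/and3P[xu1 xz xu2] xp2] xX].
  rewrite (cnt0 xa1) (cnt0 xa2) (cnt0 xu2) (cnt0 xp2) eq_sym (negbTE xw) eq_sym (negbTE xz).
  have := cnt1 x ug2; glia.
- by move: Wa; rewrite -cat_cons all_cat => /andP[].
- rewrite belast_cat belast_rcons last_rcons all_cat /= yW gW /=.
  by move: W1; rewrite belast_cat all_cat => /andP[_] /= /andP[].
- rewrite belast_cat all_cat W2 andbT; apply/allP => x /mem_belast.
  rewrite -ly => xin; apply: (allP Wa).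
  by move: xin; rewrite inE => /orP[/eqP->|xa2]; rewrite -cat_cons mem_cat ?mem_last ?xa2 ?orbT.
- by move: X1; rewrite !last_cat last_rcons.
- by rewrite last_cat.
- by move: ne; rewrite !last_cat last_rcons.
Qed.

Lemma step_c3 a p1 p2 y g z :
  cfg a p1 p2 -> y \in w :: a -> y != last w a -> all (fun x => x \in W) g ->
  all (fun x => (x \notin w :: a) && ~~ ((x \in p1) || (x \in p2) || (x \in X))) g ->
  path e y (rcons g z) -> uniq (y :: rcons g z) -> z \notin p1 -> z \in X ->
  exists a' p1' p2', cfg a' p1' p2' /\ size a' < size a.
Proof.
move=> [pa pp1 pp2 U Wa W1 W2 X1 X2 ne] Ay yb gW ag pg ug Hz1 zX.
move: pa pp1 pp2 U Wa W1 W2 X1 X2 ne yb ag.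
case: a / {Ay}(splitPl Ay) => a1 a2 ly pa pp1 pp2 U Wa W1 W2 X1 X2 ne yb ag.
have a2n : a2 != [::] by case: (a2) yb => //; rewrite cats0 ly eqxx.
have ug2 : uniq g by move: ug; rewrite /= rcons_uniq => /and3P[].
have zg : z \notin g by move: ug; rewrite /= rcons_uniq => /and3P[].
move: pa; rewrite cat_path ly => /andP[pa1 pa2].
rewrite last_cat ly in pp1 pp2 W1 W2 X1 X2 ne.
have yW : y \in W by apply: (allP Wa); rewrite -ly -cat_cons mem_cat mem_last.
have zA : z \notin w :: a1 ++ a2.
  by apply/negP => /(allP Wa) zW; move: (WX zX); rewrite zW.
exists a1, (rcons g z), (a2 ++ p1); split; last first.
  by rewrite size_cat -{1}(addn0 (size a1)) ltn_add2l lt0n size_eq0.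
constructor; rewrite ?ly.
- exact: pa1.
- exact: pg.
- by rewrite cat_path pa2.
- apply: uniq_cnt => x; have := cnt1 x U.
  rewrite -cats1 /= !count_cat /=.
  case xg: (x \in g).
    have /andP[xA xB] := allP ag _ xg.
    move: xA xB; rewrite !inE !mem_cat !negb_or => /and3P[xw xa1 xa2] /andP[/andP[xp1 xp2] xX].
    rewrite (cnt0 xa1) (cnt0 xa2) (cnt0 xp1) (cnt0 xp2) eq_sym (negbTE xw).
    have -> : (z == x) = false by apply/negP => /eqP zx; move: zg; rewrite zx xg.
    have := cnt1 x ug2; glia.
  rewrite (cnt0 (negbT xg)).
  case: (eqVneq z x) => [<-|zx]; last by glia.
  move: zA; rewrite !inE !mem_cat !negb_or => /and3P[zw za1 za2].
  by rewrite (cnt0 za1) (cnt0 za2) (cnt0 Hz1) eq_sym (negbTE zw).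
- by move: Wa; rewrite -cat_cons all_cat => /andP[].
- by rewrite belast_rcons /= yW gW.
- rewrite belast_cat all_cat W1 andbT; apply/allP => x /mem_belast.
  rewrite -ly => xin; apply: (allP Wa).
  by move: xin; rewrite inE => /orP[/eqP->|xa2]; rewrite -cat_cons mem_cat ?mem_last ?xa2 ?orbT.
- by rewrite last_rcons.
- by rewrite last_cat.
- rewrite last_rcons last_cat; apply/eqP => zl; move: Hz1.
  have : p1 != [::] by case: (p1) X1 => //= Hl; move: (WX Hl); rewrite -ly -last_cat (allP Wa) // mem_last.
  by case: (p1) zl => //= x s -> _; rewrite mem_last.
Qed.

Lemma cfg_sym a p1 p2 : cfg a p1 p2 -> cfg a p2 p1.
Proof.
move=> [pa pp1 pp2 U Wa W1 W2 X1 X2 ne]; constructor => //; last by rewrite eq_sym.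
apply: uniq_cnt => x; have := cnt1 x U; rewrite /= !count_cat; glia.
Qed.

Lemma step a p1 p2 : cfg a p1 p2 -> a != [::] ->
  (forall v, v \in W -> v != w -> exists p, good (W :\ v) X p) ->
  exists a' p1' p2', cfg a' p1' p2' /\ size a' < size a.
Proof.
move=> C an0 Hi.
have C0 := C; case: C0 => [pa pp1 pp2 U Wa W1 W2 X1 X2 ne].
have bW : last w a \in W by apply: (allP Wa); apply: mem_last.
have bw : last w a != w.
  apply/eqP => E; move: U; rewrite /= => /andP[wn _]; case/negP: wn.
  rewrite mem_cat; apply/orP; left; rewrite -{1}E.
  by case: (a) an0 => // x s _; rewrite /= mem_last.
have [R [pR lR WR uR]] := Hi _ bW bw.
have [||||||y [g [z [Ay Bz pg ag [ug sub]]]]] :=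
  @seg T e (fun x => x \in w :: a) (fun x => (x \in p1) || (x \in p2) || (x \in X)) _ R w [::].
- move=> x /= xa; rewrite !negb_or -andbA; apply/and3P; split.
  + apply/negP => x1; move: U; rewrite -cat_cons cat_uniq => /and3P[_ /hasPn H _].
    by move: (H x); rewrite mem_cat x1 xa => /(_ isT).
  + apply/negP => x1; move: U; rewrite -cat_cons cat_uniq => /and3P[_ /hasPn H _].
    by move: (H x); rewrite !mem_cat x1 orbT xa => /(_ isT).
  + by apply/negP => /WX; rewrite (allP Wa).
- by rewrite inE eqxx.
- by [].
- by [].
- by [].
- by rewrite /= lR !orbT.
have yR : y \in w :: R by apply: sub; rewrite inE eqxx.
have yWb : y \in W :\ last w a.
  case/orP: (mem_bl yR) => [/(allP WR) //|/eqP yl].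
  by move: (WX lR); rewrite -yl (allP Wa).
have yb : y != last w a by move: yWb; rewrite !inE => /andP[].
have gW : all (fun x => x \in W) g.
  apply/allP => x xg; have /andP[_] := allP ag _ xg; rewrite !negb_or => /andP[_ xX].
  have := sub x; rewrite /= inE mem_rcons inE xg !orbT => /(_ isT) /mem_bl.
  case/orP => [/(allP WR)|/eqP E]; first by rewrite inE => /andP[].
  by move: xX; rewrite E lR.
case/orP: Bz => [/orP[z1|z2]|zX].
- exact: step_c1 C Ay yb gW ag pg ug z1.
- apply: step_c1 (cfg_sym C) Ay yb gW _ pg ug z2.
  apply/allP => x xg; have /andP[-> ] := allP ag _ xg.
  by rewrite !negb_or => /andP[/andP[-> ->] ->].
case z1: (z \in p1).
  exact: step_c1 C Ay yb gW ag pg ug z1.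
exact: step_c3 C Ay yb gW ag pg ug (negbT z1) zX.
Qed.

Lemma fan : (exists p, good W X p) ->
  (forall v, v \in W -> v != w -> exists p, good (W :\ v) X p) ->
  (forall x0, x0 \in X -> exists p, good W (X :\ x0) p) ->
  exists p1 p2, cfg [::] p1 p2.
Proof.
move=> H0 Hi Hii; have [a [p1 [p2 C]]] := init H0 Hii.
elim: {a}(size a) {-2}a (leqnn (size a)) p1 p2 C => [|n IH] a.
  by rewrite leqn0 size_eq0 => /eqP -> p1 p2 C; exists p1, p2.
move=> Ha p1 p2 C; case: (eqVneq a [::]) => [E|an0].
  by exists p1, p2; rewrite -E.
have [a' [p1' [p2' [C' Ha']]]] := step C an0 Hi.
by apply: (IH a' _ p1' p2' C'); rewrite -ltnS; apply: leq_trans Ha' Ha.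
Qed.
End FanSec.
Lemma bigmin_le (I : eqType) (r : seq I) (P : pred I) (F : I -> nat) x j :
  j \in r -> P j -> \big[minn/x]_(i <- r | P i) F i <= F j.
Proof.
elim: r => //= a r IH; rewrite inE big_cons => /orP[/eqP <- -> | jr Pj].
  exact: geq_minl.
case: (P a); last exact: IH.
exact: leq_trans (geq_minr _ _) (IH jr Pj).
Qed.
Lemma bigmin_le_fin (I : finType) (P : pred I) (F : I -> nat) x j :
  P j -> \big[minn/x]_(i | P i) F i <= F j.
Proof. by apply: bigmin_le; rewrite mem_index_enum. Qed.

Section CutL.
Variables (T : finType) (h : rel T) (Wt : {set T}).

Lemma cut_le s t (C : {set T}) : s \in Wt -> t \in Wt -> C \subset Wt :\: [set s; t] ->
  ~~ connect (restr h (Wt :\: C)) s t -> cutsize h Wt s t <= #|C|.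
Proof.
move=> sW tW sub nc; rewrite /cutsize.
have sC : s \notin C by apply/negP => /(subsetP sub); rewrite !inE eqxx.
have tC : t \notin C by apply/negP => /(subsetP sub); rewrite !inE eqxx orbT.
case hst: (h s t).
  by case/negP: nc; apply: connect1; rewrite /restr /= hst !inE sW tW sC tC.
rewrite /=; apply: bigmin_le_fin.
by rewrite /separates sub nc.
Qed.

Lemma cut_ge n s t : (h s t -> n <= #|Wt :\ t|) -> n <= #|Wt| ->
  (forall C, separates h Wt s t C -> n <= #|C|) -> n <= cutsize h Wt s t.
Proof.
move=> H1 H2 H3; rewrite /cutsize; case: (h s t) H1 => [->//|_].
by apply: (big_ind (fun m => n <= m)) => // x y; rewrite leq_min => -> ->.
Qed.

Lemma Gamma_le (S : {set T}) t w : w \in S -> Gamma h Wt S t <= cutsize h Wt w t.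
Proof. by move=> wS; rewrite /Gamma; apply: bigmin_le_fin. Qed.

Lemma Gamma_ge n (S : {set T}) t : n <= #|T| -> (forall w, w \in S -> n <= cutsize h Wt w t) ->
  n <= Gamma h Wt S t.
Proof.
move=> H1 H2; rewrite /Gamma.
by apply: (big_ind (fun m => n <= m)) => // x y; rewrite leq_min => -> ->.
Qed.
End CutL.
Lemma shorten_good (T : eqType) (e : rel T) (Y : pred T) u p :
  path e u p -> all Y (belast u p) ->
  exists p', [/\ path e u p', last u p' = last u p, all Y (belast u p') & uniq (u :: p')].
Proof.
move=> pp Yp.
have [p' [pp' up' sub El]] : exists p', [/\ path e u p', uniq (u::p'), {subset p' <= p} & last u p' = last u p].
  by case: (shortenP pp) => p' ? ? ?; exists p'.
exists p'; split => //; apply/allP => x xb.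
have : x \in u :: p' := mem_belast xb.
rewrite inE => /orP[/eqP->|/sub xp].
  case: (p) sub Yp => [|v p0] sub Yp; last by case/andP: Yp.
  by case: (p') xb sub => //= y s _ /(_ y); rewrite inE eqxx => /(_ isT).
move: (mem_bl (x:=x) (x0:=u) (s:=p)); rewrite inE xp orbT => /(_ isT) /orP[/(allP Yp)//|/eqP xl].
by move: (last_notin_bl up'); rewrite El -xl xb.
Qed.

Section Graph.
Variables (V : finType) (e : rel V) (M : {set V}).
Hypothesis esym : symmetric e.
Local Notation N := (~: M).

Lemma in_auxD (C : {set V}) u : (Some u \in aux_verts N :\: Some @: C) = (u \in N :\: C).
Proof. by rewrite /aux_verts !inE !(mem_imset _ _ (@Some_inj _)) !inE. Qed.

Lemma None_auxD (C : {set V}) : None \in aux_verts N :\: Some @: C.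
Proof.
rewrite /aux_verts !inE eqxx andbT; by apply/negP => /imsetP[x _].
Qed.

Lemma aux_to_path (A C : {set V}) : A \subset M -> forall s u, u \in N :\: C ->
  path (restr (aux_edge e N A) (aux_verts N :\: Some @: C)) (Some u) s ->
  last (Some u) s = None ->
  exists p, [/\ path e u p, last u p \in A & all (fun x => x \in N :\: C) (belast u p)].
Proof.
move=> AM; elim=> [|o s IH] u uN //= /andP[ed ps] ls.
rewrite /restr /= in ed; case/and3P: ed; case: o ps ls => [v|] ps ls ed _ vin.
  rewrite in_auxD in vin.
  have [p [pp lp ap]] := IH v vin ps ls.
  by exists (v :: p); rewrite /= ed pp lp uN ap.
case/andP: ed => _ /existsP [m /andP[mA em]].
by exists [:: m]; rewrite /= esym em mA uN.
Qed.

Lemma path_to_aux (A C : {set V}) : A \subset M -> forall p u, u \in N :\: C ->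
  path e u p -> last u p \in A -> all (fun x => x \in N :\: C) (belast u p) ->
  connect (restr (aux_edge e N A) (aux_verts N :\: Some @: C)) (Some u) None.
Proof.
move=> AM; elim=> [|v p IH] u uN /=.
  by move=> _ /(subsetP AM) uM; move: uN; rewrite !inE uM andbF.
case/andP=> euv pp lp /andP[_ ap].
case: p IH pp lp ap => [|v2 p] IH pp lp ap.
  apply: connect1; rewrite /restr /= in_auxD uN None_auxD !andbT.
  have uN' : u \in N by move: uN; rewrite inE => /andP[].
  rewrite uN' /=.
  by apply/existsP; exists v; rewrite lp esym.
have vN : v \in N :\: C by case/andP: ap.
apply: connect_trans (IH _ vN pp lp ap).
by apply: connect1; rewrite /restr /= euv !in_auxD uN vN.
Qed.

Lemma first_mon s u : path e u s -> last u s \in M -> u \notin M ->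
  exists s', [/\ path e u s', last u s' \in M,
     all (fun x => x \notin M) (belast u s') & {subset s' <= s}].
Proof.
elim: s u => [|v s IH] u /=; first by move=> _ ->.
case/andP => euv ps ls uM.
case vM: (v \in M).
  exists [:: v]; rewrite /= euv vM uM; split => // x; rewrite !inE => ->.
  by [].
have [s' [ps' ls' as' sub]] := IH v ps ls (negbT vM).
exists (v :: s'); rewrite /= euv ps' ls' uM as'; split => // x.
by rewrite !inE => /orP[->//|/sub ->]; rewrite orbT.
Qed.

Lemma two_sides p w : csp_path e M p -> w \in p -> w \notin M ->
  exists q1 q2, [/\ path e w q1 /\ path e w q2, last w q1 \in M /\ last w q2 \in M,
    all (fun x => x \notin M) (belast w q1) /\ all (fun x => x \notin M) (belast w q2),
    {subset q1 <= p} /\ {subset q2 <= p} & forall y, y \in q1 -> y \notin q2].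
Proof.
case: p => [|x q] //= /and5P[pq uq xM lM xl] wp wM.
have wq : w \in q.
  by move: wp; rewrite inE => /orP[/eqP wx|//]; move: wM; rewrite wx xM.
clear wp; move: pq uq lM xl; case: q / {wq}(splitPr wq) => l1 l2 pq uq lM xl.
have := pq; rewrite cat_path => /andP[pl1 /= /andP[ew pl2]].
have pL : path e w (rev (x :: l1)).
  have := rev_path e x (rcons l1 w); rewrite last_rcons belast_rcons => ->.
  rewrite (@eq_path _ _ e); first by rewrite rcons_path pl1 ew.
  by move=> a b /=; rewrite esym.
have lL : last w (rev (x :: l1)) = x by rewrite rev_cons last_rcons.
have lx : last w (rev (x :: l1)) \in M by rewrite lL.
have [q1 [pq1 lq1 aq1 sq1]] := first_mon pL lx wM.
have l2M : last w l2 \in M by move: lM; rewrite last_cat.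
have [q2 [pq2 lq2 aq2 sq2]] := first_mon pl2 l2M wM.
exists q1, q2; split => //.
  split => y.
    by move/sq1; rewrite mem_rev => yl; rewrite -cat_cons mem_cat yl.
  by move/sq2 => yl; rewrite inE !mem_cat inE yl !orbT.
move=> y /sq1; rewrite mem_rev => y1; apply/negP => /sq2 y2.
case/andP: uq => xn; rewrite cat_uniq => /and3P[_ /hasPn H _].
move: y1; rewrite inE => /orP[/eqP yx|y1].
  by move: xn; rewrite -yx mem_cat inE y2 !orbT.
by move: (H y); rewrite inE y2 orbT => /(_ isT); rewrite y1.
Qed.
End Graph.

Section Main.
Variables (V : finType) (e : rel V) (M : {set V}).
Hypothesis esym : symmetric e.
Local Notation N := (~: M).

Lemma card_aux : #|aux_verts N| = #|N|.+1.
Proof.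
rewrite /aux_verts cardsU1 card_imset; last exact: Some_inj.
by have -> : None \notin [set Some x | x in N] by apply/negP => /imsetP[].
Qed.

Lemma card_aux1 : #|aux_verts N :\ None| = #|N|.
Proof.
rewrite /aux_verts setU1K; first by rewrite card_imset //; apply: Some_inj.
by apply/negP => /imsetP[].
Qed.

Lemma mk_csp (F2 : {set V}) w p1 p2 : F2 \subset N ->
  cfg e (N :\: F2) M w [::] p1 p2 ->
  exists p, [&& csp_path e M p, w \in p & ~~ has (fun x => x \in F2) p].
Proof.
move=> F2N [_ pp1 pp2 U Wa W1 W2 X1 X2 ne]; rewrite /= in pp1 pp2 W1 W2 X1 X2 ne.
have wM : w \notin M by move: Wa; rewrite /= !inE => /andP[/andP[_ ->]].
case/lastP: p1 pp1 U W1 X1 ne => [|r1 x1] pp1 U W1 X1 ne.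
  by move: X1 wM; rewrite /= => ->.
rewrite last_rcons in X1 ne.
exists (x1 :: (rev r1 ++ w :: p2)).
have pr : path e x1 (rev (w :: r1)).
  have := rev_path e w (rcons r1 x1); rewrite last_rcons belast_rcons => ->.
  rewrite (@eq_path _ _ e) //; by move=> a b /=; rewrite esym.
apply/and3P; split.
- rewrite /csp_path; apply/and5P; split.
  + by rewrite -cat_rcons -rev_cons cat_path pr /= rev_cons last_rcons.
  + apply: uniq_cnt => x; have := cnt1 x U.
    rewrite -cat_rcons -rev_cons -cat_cons.
    rewrite /= !count_cat !count_rev /= -cats1 !count_cat /=; glia.
  + exact: X1.
  + by rewrite last_cat /=.
  + by rewrite last_cat /=.
- by rewrite inE mem_cat inE eqxx !orbT.
apply/hasPn => x; rewrite inE mem_cat inE => /orP[/eqP ->|/orP[xr|/orP[/eqP->|xp]]].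
- by apply/negP => /(subsetP F2N); rewrite inE X1.
- move: xr; rewrite mem_rev => xr.
  by move: W1; rewrite belast_rcons => /allP /(_ x); rewrite inE xr orbT !inE => /(_ isT) /andP[].
- by move: W1; rewrite belast_rcons /= !inE => /andP[/andP[]].
have := mem_bl (x0:=w) (s:=p2) (x:=x); rewrite inE xp orbT => /(_ isT) /orP[/(allP W2)|/eqP ->].
  by rewrite !inE => /andP[].
by apply/negP => /(subsetP F2N); rewrite inE X2.
Qed.

Lemma sub_auxD (C : {set V}) w : C \subset N -> w \notin C ->
  Some @: C \subset aux_verts N :\: [set Some w; None].
Proof.
move=> CN wC; apply/subsetP => _ /imsetP[c cC ->].
rewrite !inE /= (mem_imset _ _ (@Some_inj _)) (subsetP CN _ cC) andbT.
by apply/negP => /orP[/eqP[E]|//]; move: wC; rewrite -E cC.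
Qed.

Lemma get_path (A C : {set V}) w : A \subset M -> C \subset N -> w \in N :\: C ->
  #|C| < cutsize (aux_edge e N A) (aux_verts N) (Some w) None ->
  exists p, good e w (N :\: C) A p.
Proof.
move=> AM CN wNC lt.
case conn: (connect (restr (aux_edge e N A) (aux_verts N :\: Some @: C)) (Some w) None).
  case/connectP: conn => s ps ls.
  have [p [pp lp ap]] := aux_to_path esym AM wNC ps (Logic.eq_sym ls).
  have [p' [pp' lp' ap' up']] := shorten_good pp ap.
  by exists p'; constructor => //; rewrite lp'.
have wC : w \notin C by move: wNC; rewrite inE => /andP[].
have wN : w \in N by move: wNC; rewrite inE => /andP[].
have := @cut_le _ (aux_edge e N A) (aux_verts N) (Some w) None (Some @: C).
rewrite card_imset; last exact: Some_inj.
move=> /(_ _ _ (sub_auxD CN wC) (negbT conn)) H.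
suff : false by [].
rewrite -(ltnn #|C|); apply: leq_trans lt (H _ _).
- by rewrite /aux_verts !inE (mem_imset _ _ (@Some_inj _)) wN orbT.
- by rewrite /aux_verts !inE eqxx.
Qed.

Lemma one_side (S F2 : {set V}) k w : w \in S -> S \subset N -> w \notin F2 ->
  F2 \subset N -> #|F2| <= k ->
  k + 2 <= Gamma_star e M S -> (forall m, m \in M -> k + 1 <= Gamma_m e M m S) ->
  exists p, [&& csp_path e M p, w \in p & ~~ has (fun x => x \in F2) p].
Proof.
move=> wS SN wF F2N F2k Hs Hm.
have wN : w \in N by apply: (subsetP SN).
have wW : w \in N :\: F2 by rewrite inE wF wN.
have cs : k + 2 <= cutsize (aux_edge e N M) (aux_verts N) (Some w) None.
  apply: leq_trans Hs _; apply: Gamma_le; exact: imset_f.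
suff [p1 [p2 C]] : exists p1 p2, cfg e (N :\: F2) M w [::] p1 p2 by exact: mk_csp F2N C.
apply: (fan (W:=N :\: F2) (X:=M) _ wW).
- by move=> x xM; rewrite !inE xM andbF.
- apply: get_path; [exact: subxx | exact: F2N | exact: wW | ].
  by apply: leq_trans cs; rewrite addn2 ltnS (leq_trans F2k) // leqnSn.
- move=> v vW vw.
  have -> : (N :\: F2) :\ v = N :\: (v |: F2).
    apply/setP => x; rewrite !inE.
    by case: (x == v); case: (x \in F2); case: (x \in M).
  apply: get_path; first exact: subxx.
  + apply/subsetP => x; rewrite !inE => /orP[/eqP->|/(subsetP F2N)]; last by rewrite inE.
    by move: vW; rewrite !inE => /andP[].
  + by rewrite !inE eq_sym (negbTE vw) (negbTE wF) /= -in_setC.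
  apply: leq_trans cs; rewrite cardsU1 addn2 ltnS.
  by apply: leq_add (leq_b1 _) F2k.
move=> x0 x0M; apply: get_path; [ | exact: F2N | exact: wW | ].
  by apply/subsetP => x; rewrite inE => /andP[].
have H1 := Hm _ x0M.
have H2 := @Gamma_le _ (aux_edge e N (M :\ x0)) (aux_verts N) (Some @: S) None (Some w) (imset_f _ wS).
apply: leq_trans (leq_trans H1 H2); by rewrite addn1 ltnS.
Qed.

Lemma hit (A C' : {set V}) w q : A \subset M -> w \in N :\: C' -> path e w q ->
  last w q \in A -> all (fun x => x \notin M) (belast w q) ->
  ~~ connect (restr (aux_edge e N A) (aux_verts N :\: Some @: C')) (Some w) None ->
  exists2 c, c \in q & c \in C'.
Proof.
move=> AM wNC pq lq aq nc.
case: (boolP (has (fun x => x \in C') q)) => [/hasP[c cq cC]|/hasPn H]; first by exists c.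
case/negP: nc; apply: (path_to_aux esym AM wNC pq lq).
apply/allP => x xb; rewrite in_setD in_setC (allP aq _ xb) andbT.
move: (mem_belast xb); rewrite inE => /orP[/eqP ->|/H //].
by move: wNC; rewrite in_setD => /andP[].
Qed.

Lemma sep_split (C : {set option V}) w :
  C \subset aux_verts N :\: [set Some w; None] ->
  exists C' : {set V}, [/\ C = Some @: C', C' \subset N & w \notin C'].
Proof.
move=> sub; exists [set v : V | Some v \in C]; split.
- apply/setP => -[v|]; first by rewrite (mem_imset _ _ (@Some_inj _)) inE.
  have -> : (None \in Some @: [set v | Some v \in C]) = false.
    by apply/negP => /imsetP[].
  by apply/negP => /(subsetP sub); rewrite !inE eqxx orbT.
- apply/subsetP => v; rewrite inE => /(subsetP sub).
  move=> H; rewrite /aux_verts !inE in H; case/andP: H => _ /orP[//|]; by rewrite (mem_imset _ _ (@Some_inj _)).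
by rewrite inE; apply/negP => /(subsetP sub); rewrite !inE eqxx.
Qed.

Lemma PF_eq (F1 : {set V}) w p :
  (csp_path e M p -> w \in p -> has (fun x => x \in F1) p) ->
  PF e M F1 p = PF e M (w |: F1) p.
Proof.
rewrite /PF; case cp: (csp_path e M p) => //= H.
case: (boolP (w \in p)) => wp.
  by rewrite (H isT wp); symmetry; apply/hasP; exists w => //; rewrite !inE eqxx.
apply: eq_in_has => x xp /=; rewrite in_setU1.
by have -> : (x == w) = false by apply/negP => /eqP xw; move: wp; rewrite -xw xp.
Qed.

Lemma last_in w q : w \notin M -> last w q \in M -> last w q \in q.
Proof.
move=> wM lM; have := mem_last w q; rewrite inE => /orP[/eqP E|//].
by move: lM; rewrite E (negbTE wM).
Qed.

Lemma partb_star (S : {set V}) k : 1 <= k -> S \subset N -> k + 1 <= #|N| ->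
  k_identifiable e M k S -> k + 1 <= Gamma_star e M S.
Proof.
move=> k1 SN kN Hid; apply: Gamma_ge.
  by rewrite card_option; apply: leq_trans kN (leq_trans (max_card _) (leqnSn _)).
move=> _ /imsetP[w wS ->].
have wN : w \in N by apply: (subsetP SN).
have wM : w \notin M by rewrite -in_setC.
apply: cut_ge; first by rewrite card_aux1.
  by rewrite card_aux (leq_trans kN).
move=> C /andP[sub nc]; have [C' [CE C'N wC']] := sep_split sub.
rewrite CE card_imset; last exact: Some_inj.
rewrite CE in nc.
rewrite leqNgt; apply/negP; rewrite addn1 ltnS => Ck.
pose c0 := odflt w [pick x in C'].
have Hc0 : C' != set0 -> c0 \in C'.
  rewrite /c0; case: pickP => [x //|H] /=.
  by case/set0Pn => x; rewrite (H x).
pose F1 := C' :\ c0.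
have F1N : F1 \subset N := subset_trans (subD1set C' c0) C'N.
have wF1 : w \notin F1 by rewrite !inE negb_and wC' orbT.
have F2N : w |: F1 \subset N.
  by apply/subsetP => x; rewrite in_setU1 => /orP[/eqP->|/(subsetP F1N)].
have cF1 : #|F1| <= k by apply: leq_trans (subset_leq_card (subD1set C' c0)) Ck.
have cF2 : #|w |: F1| <= k.
  rewrite cardsU1 wF1 add1n.
  case: (eqVneq C' set0) => [C0|Cn].
    by rewrite /F1 C0 set0D cards0.
  by move: Ck; rewrite (cardsD1 c0 C') (Hc0 Cn) add1n.
have nF : F1 :&: S != (w |: F1) :&: S.
  apply/negP => /eqP E.
  have : w \in (w |: F1) :&: S by rewrite !inE eqxx wS.
  by rewrite -E inE (negbTE wF1).
have [p Hp] := Hid F1 (w |: F1) F1N F2N cF1 cF2 nF.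
case/negP: Hp; apply/eqP; apply: PF_eq => cp wp.
have [q1 [q2 [[pq1 pq2] [lq1 lq2] [aq1 aq2] [sq1 sq2] dis]]] := two_sides esym cp wp wM.
have wNC : w \in N :\: C' by rewrite in_setD wC'.
have [c1 c1q c1C] := hit (subxx M) wNC pq1 lq1 aq1 nc.
have [c2 c2q c2C] := hit (subxx M) wNC pq2 lq2 aq2 nc.
have c12 : c1 != c2 by apply/eqP => E; move: (dis _ c1q); rewrite E c2q.
have Cn : C' != set0 by apply/set0Pn; exists c1.
apply/hasP; case: (eqVneq c1 c0) => [E|ne].
  exists c2; first exact: sq2.
  by rewrite !inE c2C andbT; apply/eqP => E2; move: c12; rewrite E E2 eqxx.
by exists c1; [exact: sq1 | rewrite !inE c1C ne].
Qed.

Lemma partb_m (S : {set V}) k m : m \in M -> S \subset N -> k + 1 <= #|N| ->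
  k_identifiable e M k S -> k <= Gamma_m e M m S.
Proof.
move=> mM SN kN Hid; apply: Gamma_ge.
  rewrite card_option; apply: leq_trans (leq_addr 1 k) _.
  by apply: leq_trans kN (leq_trans (max_card _) (leqnSn _)).
move=> _ /imsetP[w wS ->].
have wN : w \in N by apply: (subsetP SN).
have wM : w \notin M by rewrite -in_setC.
have kN' : k <= #|N| by apply: leq_trans (leq_addr 1 k) kN.
apply: cut_ge; first by rewrite card_aux1.
  by rewrite card_aux (leq_trans kN').
move=> C /andP[sub nc]; have [C' [CE C'N wC']] := sep_split sub.
rewrite CE card_imset; last exact: Some_inj.
rewrite CE in nc.
rewrite leqNgt; apply/negP => Ck.
have F2N : w |: C' \subset N.
  by apply/subsetP => x; rewrite in_setU1 => /orP[/eqP->|/(subsetP C'N)].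
have cF1 : #|C'| <= k by apply: ltnW.
have cF2 : #|w |: C'| <= k by rewrite cardsU1 wC' add1n.
have nF : C' :&: S != (w |: C') :&: S.
  apply/negP => /eqP E.
  have : w \in (w |: C') :&: S by rewrite !inE eqxx wS.
  by rewrite -E inE (negbTE wC').
have [p Hp] := Hid C' (w |: C') C'N F2N cF1 cF2 nF.
case/negP: Hp; apply/eqP; apply: PF_eq => cp wp.
have [q1 [q2 [[pq1 pq2] [lq1 lq2] [aq1 aq2] [sq1 sq2] dis]]] := two_sides esym cp wp wM.
have wNC : w \in N :\: C' by rewrite in_setD wC'.
have AM : M :\ m \subset M := subD1set M m.
have l12 : last w q1 != last w q2.
  by apply/eqP => E; move: (dis _ (last_in wM lq1)); rewrite E (last_in wM lq2).
apply/hasP; case: (eqVneq (last w q1) m) => [E|ne].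
  have lA : last w q2 \in M :\ m by rewrite !inE lq2 andbT -E eq_sym.
  have [c cq cC] := hit AM wNC pq2 lA aq2 nc.
  by exists c; [exact: sq2 | ].
have lA : last w q1 \in M :\ m by rewrite !inE lq1 andbT ne.
have [c cq cC] := hit AM wNC pq1 lA aq1 nc.
by exists c; [exact: sq1 | ].
Qed.
End Main.

Unset Implicit Arguments.
Set Strict Implicit.

Theorem theorem2 (V : finType) (e : rel V) (M S : {set V}) (k : nat) :
  symmetric e -> irreflexive e -> (forall x y, connect e x y) ->
  1 <= k ->
  S \subset ~: M -> S != set0 ->
  ( (k + 2 <= #|~: M| ->
     k + 2 <= Gamma_star e M S ->
     (forall m, m \in M -> k + 1 <= Gamma_m e M m S) ->
     k_identifiable e M k S)
  /\
    (k + 1 <= #|~: M| ->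
     k_identifiable e M k S ->
     k + 1 <= Gamma_star e M S /\
     (forall m, m \in M -> k <= Gamma_m e M m S)) ).
Proof.
move=> esym _ _ k1 SN _; split.
  move=> _ Hs Hm F1 F2 F1N F2N c1 c2 nF.
  have [w /andP[wS wd]] : exists w, (w \in S) && ((w \in F1) != (w \in F2)).
    case: (boolP [exists w, (w \in S) && ((w \in F1) != (w \in F2))]) => [/existsP //|/existsPn H].
    case/negP: nF.
    apply/eqP/setP => x; rewrite !inE; have := H x.
    by case: (x \in S); rewrite ?andbF ?andbT //= negbK => /eqP.
  case w1: (w \in F1) wd => /= wd.
    have w2 : w \notin F2 by move: wd; case: (w \in F2).
    have [p /and3P[cp wp nh]] := one_side esym wS SN w2 F2N c2 Hs Hm.
    have hF : has (fun x => x \in F1) p by apply/hasP; exists w.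
    by exists p; rewrite /PF cp (negbTE nh) hF.
  have [p /and3P[cp wp nh]] := one_side esym wS SN (negbT w1) F1N c1 Hs Hm.
  have hF : has (fun x => x \in F2) p.
    by apply/hasP; exists w => //; move: wd; case: (w \in F2).
  by exists p; rewrite /PF cp (negbTE nh) hF.
move=> kN Hid; split; first by have H := partb_star esym k1 SN kN Hid; exact: H.
move=> m mM; have H := partb_m esym mM SN kN Hid; exact: H.
Qed.
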